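(* Let $G$ be an elementary abelian $2$-group and let $T\subseteq G$ be a generating subset of $G$ with $0\in T$. Let $\mathcal{U}$ be the group with presentation $$\mathcal{U}=\big\langle (t^{\mathcal U})_{t\in T}\;\big|\;(t^{\mathcal U})^2=1,\ t^{\mathcal U}s^{\mathcal U}(t^{\mathcal U})^{-1}=(2t-s)^{\mathcal U}\text{ for all } s,t\in T\big\rangle,$$ and let $\mathcal{W}$ be the subgroup generated by $\{(0,t,-1)\mid t\in T\}$ of the group $(G\wedge G)\times G\times\{1,-1\}$ with multiplication $(l,g,v)(l',g',v')=(l+l'+g\wedge(vg'),\,g+vg',\,vv')$. Let $\mathcal U\to\mathcal W$ be the group homomorphism determined by $t^{\mathcal U}\mapsto(0,t,-1)$ for $t\in T$. Then this homomorphism is injective if and only if the set $T\setminus\{0\}$ is $2$-independent in $G$.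
   Context: Since $2s=0$ in $G$, the relation reads $t^{\mathcal U}s^{\mathcal U}(t^{\mathcal U})^{-1}=s^{\mathcal U}$. A subset $M$ of an abelian group $G$ (here an $\mathbb{F}_2$-vector space) is called 2-dependent if the elements of the set $\{g\otimes g\mid g\in M\}$ are linearly dependent in $G\otimes G$, and 2-independent if it is not 2-dependent. The homomorphism $\mathcal U\to\mathcal W$ exists since the elements $(0,t,-1)$ satisfy the defining relations of $\mathcal U$. *)

(* Defs.v *)
From HB Require Import structures.
From mathcomp Require Import all_boot all_algebra.
From mathcomp Require Import monoid.
Set Implicit Arguments.
Unset Strict Implicit.
Unset Printing Implicit Defensive.
Import GRing.Theory.
Local Open Scope ring_scope.

Definition biadditive (G A : zmodType) (f : G -> G -> A) : Prop :=
  (forall x y z, f (x + y) z = f x z + f y z) /\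
  (forall x y z, f x (y + z) = f x y + f x z).

Definition additive_fun (A B : zmodType) (h : A -> B) : Prop :=
  forall u v, h (u + v) = h u + h v.

Definition is_tensor_square (G TT : zmodType) (tens : G -> G -> TT) : Prop :=
  biadditive tens /\
  forall (A : zmodType) (f : G -> G -> A), biadditive f ->
    exists h : TT -> A, additive_fun h /\ (forall x y, h (tens x y) = f x y) /\
      forall h' : TT -> A, additive_fun h' ->
        (forall x y, h' (tens x y) = f x y) -> forall u, h' u = h u.

Definition is_exterior_square (G E : zmodType) (wedge : G -> G -> E) : Prop :=
  (biadditive wedge /\ forall x, wedge x x = 0) /\
  forall (A : zmodType) (f : G -> G -> A), biadditive f -> (forall x, f x x = 0) ->
    exists h : E -> A, additive_fun h /\ (forall x y, h (wedge x y) = f x y) /\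
      forall h' : E -> A, additive_fun h' ->
        (forall x y, h' (wedge x y) = f x y) -> forall u, h' u = h u.

(* T generates G as an abelian group (for an elementary abelian 2-group,
   the subgroup generated by T is the set of finite sums of elements of T). *)
Definition generates (G : zmodType) (T : G -> Prop) : Prop :=
  forall g : G, exists s : seq G, (forall x, x \in s -> T x) /\ g = \sum_(x <- s) x.

Definition U_relations (G : zmodType) (T : G -> Prop) (H : groupType) (f : G -> H)
  : Prop :=
  (forall t, T t -> (f t ^+ 2 = 1)%g) /\
  (forall t s, T t -> T s -> (f t * f s * (f t)^-1 = f (t *+ 2 - s))%g).

Definition presents (G : zmodType) (T : G -> Prop) (U : groupType) (iota : G -> U)
  : Prop :=
  U_relations T iota /\
  (forall u : U, exists w : seq (G * bool), (forall p, p \in w -> T p.1) /\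
     u = (\prod_(p <- w) (if p.2 then (iota p.1)^-1 else iota p.1))%g) /\
  (forall (H : groupType) (f : G -> H), U_relations T f ->
     exists psi : U -> H, (forall x y, psi (x * y)%g = (psi x * psi y)%g) /\
       forall t, T t -> psi (iota t) = f t).

(* Sign action of v in {1,-1} on G; v is encoded by b : bool, true meaning -1. *)
Definition sgnact (G : zmodType) (b : bool) (g : G) : G := if b then - g else g.

Definition Wmul (G E : zmodType) (wedge : G -> G -> E) (x y : E * G * bool)
  : E * G * bool :=
  let: (l, g, v) := x in let: (l', g', v') := y in
  (l + l' + wedge g (sgnact v g'), g + sgnact v g', v (+) v').

(* M is 2-dependent: the elements of {g (x) g | g in M} are linearly dependent
   (over F_2) in G (x) G, i.e. some nonempty finite set of pairwise distinct
   such elements sums to 0. *)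
Definition two_dependent (G TT : zmodType) (tens : G -> G -> TT) (M : G -> Prop)
  : Prop :=
  exists s : seq G, [/\ s <> [::], (forall x, x \in s -> M x),
    uniq (map (fun x => tens x x) s) & \sum_(x <- s) tens x x = 0].

Definition two_independent (G TT : zmodType) (tens : G -> G -> TT) (M : G -> Prop)
  : Prop := ~ two_dependent tens M.

(* Main.v *)
Require Import Defs.
From HB Require Import structures.
From mathcomp Require Import all_boot all_algebra.
From mathcomp Require Import monoid.
From mathcomp Require Import boolp.
From mathcomp Require wochoice.
Set Implicit Arguments. Unset Strict Implicit. Unset Printing Implicit Defensive.
Import GRing.Theory.
Local Open Scope ring_scope.

Section WO.
Variable T : eqType.
Definition WR : rel T := sval (wochoice.well_ordering_principle T).
Lemma WRwo : wochoice.well_order WR.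
Proof. exact: (svalP (wochoice.well_ordering_principle T)). Qed.

Lemma WR_min (l : seq T) : l != [::] -> exists m, m \in l /\ forall y, y \in l -> WR m y.
Proof.
case: l => // x l _.
have [|m [[Hm Hlb] _]] := WRwo (A := [pred y | y \in x :: l]).
  by exists x; rewrite !inE eqxx.
exists m; split => // y Hy; exact: Hlb.
Qed.

Lemma WR_refl x : WR x x.
Proof. by have [//|m [/[!inE] /eqP -> /(_ x)]] := @WR_min [:: x]; rewrite mem_head; apply. Qed.

Lemma WR_total x y : WR x y || WR y x.
Proof.
have [//|m [/[!inE] /orP[] /eqP -> H]] := @WR_min [:: x; y].
  by rewrite H // !inE eqxx orbT.
by rewrite H ?orbT // !inE eqxx.
Qed.

Lemma WR_anti x y : WR x y -> WR y x -> x = y.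
Proof.
move=> Hxy Hyx.
have [|m [_ Hu]] := WRwo (A := [pred z | z \in [:: x; y]]).
  by exists x; rewrite !inE eqxx.
have -> : x = m.
  by apply/esym/Hu; split; [rewrite !inE eqxx|move=> z /[!inE] /orP[] /eqP ->; rewrite ?WR_refl].
apply: Hu; split; first by rewrite !inE eqxx orbT.
by move=> z /[!inE] /orP[] /eqP ->; rewrite ?WR_refl.
Qed.

Lemma WR_trans x y z : WR x y -> WR y z -> WR x z.
Proof.
move=> Hxy Hyz.
have [//|m [/[!inE] /or3P[] /eqP -> H]] := @WR_min [:: x; y; z].
- by apply: H; rewrite !inE eqxx !orbT.
- have -> : x = y by apply: WR_anti => //; apply: H; rewrite !inE eqxx.
  done.
- have eyz : y = z by apply: WR_anti => //; apply: H; rewrite !inE eqxx !orbT.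
  by rewrite -eyz.
Qed.

Lemma WR_max (l : seq T) : l != [::] -> exists m, m \in l /\ forall y, y \in l -> WR y m.
Proof.
elim: l => // x l IH _.
case: (altP (l =P [::])) => [->|lne].
  by exists x; split; rewrite ?mem_head // => y /[!inE] /eqP ->; exact: WR_refl.
have [m [ml Hm]] := IH lne.
case/orP: (WR_total x m) => H.
  exists m; split; first by rewrite inE ml orbT.
  by move=> y /[!inE] /orP[/eqP ->|/Hm].
exists x; split; first exact: mem_head.
move=> y /[!inE] /orP[/eqP ->|/Hm yl]; first exact: WR_refl.
exact: WR_trans yl H.
Qed.
End WO.

Section Basis.
Variable G : zmodType.
Hypothesis hG2 : forall g : G, g + g = 0.

Lemma oppG (g : G) : - g = g.
Proof. by apply/eqP; rewrite eq_sym -addr_eq0 hG2. Qed.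

Definition symdiff (s1 s2 : seq G) :=
  [seq x <- s1 | x \notin s2] ++ [seq x <- s2 | x \notin s1].

Lemma mem_symdiff s1 s2 x : (x \in symdiff s1 s2) = (x \in s1) (+) (x \in s2).
Proof.
rewrite mem_cat !mem_filter.
by case: (x \in s1); case: (x \in s2).
Qed.

Lemma uniq_symdiff s1 s2 : uniq s1 -> uniq s2 -> uniq (symdiff s1 s2).
Proof.
move=> u1 u2; rewrite cat_uniq !filter_uniq // andbT /=.
apply/hasPn => x; rewrite !mem_filter => /andP[nx1 _].
by apply/negP => /andP[_ x1]; rewrite x1 in nx1.
Qed.

Lemma sum_symdiff (A : zmodType) (F : G -> A) s1 s2 :
  (forall x, F x + F x = 0) -> uniq s1 -> uniq s2 ->
  \sum_(x <- symdiff s1 s2) F x = \sum_(x <- s1) F x + \sum_(x <- s2) F x.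
Proof.
move=> hF u1 u2.
rewrite big_cat !big_filter.
rewrite (bigID (fun x => x \in s2) (r := s1) predT F) (bigID (fun x => x \in s1) (r := s2) predT F) /=.
have -> : \sum_(x <- s2 | x \in s1) F x = \sum_(x <- s1 | x \in s2) F x.
  rewrite -[LHS]big_filter -[RHS]big_filter; apply: perm_big; apply: uniq_perm; rewrite ?filter_uniq //.
  by move=> x; rewrite !mem_filter andbC.
set c := \sum_(x <- s1 | x \in s2) F x.
have cc : c + c = 0 by rewrite /c -big_split /=; apply: big1 => x _; apply: hF.
by rewrite addrCA !addrA cc add0r addrC.
Qed.

Definition inspanb (X : G -> Prop) g :=
  exists s : seq G, (forall x, x \in s -> X x) /\ g = \sum_(x <- s) x.
Definition Bas (b : G) : Prop := ~ inspanb (fun h => WR h b /\ h != b) b.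
Definition rep (g : G) (s : seq G) :=
  [/\ uniq s, forall x, x \in s -> Bas x & g = \sum_(x <- s) x].

Lemma rep_add x y s1 s2 : rep x s1 -> rep y s2 -> rep (x + y) (symdiff s1 s2).
Proof.
move=> [u1 b1 e1] [u2 b2 e2]; split; first exact: uniq_symdiff.
  move=> z; rewrite mem_symdiff; case: (z \in s1) (b1 z) => [/(_ isT) //|_].
  by case: (z \in s2) (b2 z) => [/(_ isT) //|].
by rewrite (@sum_symdiff _ id) // e1 e2.
Qed.

Lemma rep_ex g : exists s, rep g s.
Proof.
apply: contrapT => nP.
have [|m [[Am lbm] _]] := WRwo (A := [pred g | ~~ `[< exists s, rep g s >]]).
  by exists g; rewrite inE; apply/asboolPn.
move: Am; rewrite inE => /asboolPn; apply.
case: (pselect (Bas m)) => hB.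
  exists [:: m]; split => //; first by move=> x /[!inE] /eqP ->.
  by rewrite big_seq1.
move/contrapT: hB => [s [hs ->]].
have Ps : forall x, x \in s -> exists s', rep x s'.
  move=> x xs; apply: contrapT => nPx.
  have := lbm x; rewrite inE => /(_ (introN (asboolP _) nPx)) hmx.
  have [hxm nxm] := hs x xs.
  by move: nxm; rewrite (WR_anti hxm hmx) eqxx.
elim: s Ps {hs} => [_|x s IH Ps]; first by exists [::]; split; rewrite ?big_nil.
have [s1 r1] := Ps x (mem_head _ _).
have [s2 r2] := IH (fun y ys => Ps y (mem_behead (s := x :: s) ys)).
by exists (symdiff s1 s2); rewrite big_cons; apply: rep_add.
Qed.

Lemma bas_indep s : uniq s -> (forall x, x \in s -> Bas x) -> \sum_(x <- s) x = 0 -> s = [::].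
Proof.
move=> us bs s0; apply/eqP; apply: contraT => sne.
have [m [ms hm]] := WR_max sne.
exfalso; apply: (bs m ms); exists (rem m s); split.
  move=> y yr; split; first by apply: hm; exact: mem_rem yr.
  by apply: contraTneq yr => ->; rewrite mem_rem_uniqF.
have e : m + \sum_(x <- rem m s) x = 0.
  by move: s0; rewrite (perm_big _ (perm_to_rem ms)) big_cons.
move/eqP: e; rewrite addr_eq0 => /eqP e; by rewrite {1}e oppG.
Qed.

Lemma rep_uniq g s1 s2 : rep g s1 -> rep g s2 -> s1 =i s2.
Proof.
move=> r1 r2; have [u b e] := rep_add r1 r2.
have e0 : symdiff s1 s2 = [::] by apply: bas_indep => //; rewrite -e hG2.
move=> x; have := mem_symdiff s1 s2 x; rewrite e0 in_nil.
by case: (x \in s1); case: (x \in s2).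
Qed.

Definition supp (g : G) : seq G := projT1 (cid (rep_ex g)).
Lemma supp_rep g : rep g (supp g).
Proof. exact: (projT2 (cid (rep_ex g))). Qed.

Lemma supp_uniq g : uniq (supp g). Proof. by case: (supp_rep g). Qed.
Lemma supp_sum g : \sum_(x <- supp g) x = g. Proof. by case: (supp_rep g). Qed.

Lemma mem_supp_add x y b : (b \in supp (x + y)) = (b \in supp x) (+) (b \in supp y).
Proof. by rewrite (rep_uniq (supp_rep (x + y)) (rep_add (supp_rep x) (supp_rep y))) mem_symdiff. Qed.

Lemma sum_supp_add (A : zmodType) (F : G -> A) x y :
  (forall x, F x + F x = 0) ->
  \sum_(b <- supp (x + y)) F b = \sum_(b <- supp x) F b + \sum_(b <- supp y) F b.
Proof.
move=> hF; rewrite -sum_symdiff ?supp_uniq //; apply: perm_big; apply: uniq_perm.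
- exact: supp_uniq.
- by apply: uniq_symdiff; apply: supp_uniq.
by move=> b; rewrite mem_supp_add mem_symdiff.
Qed.



Lemma addf0 (A B : zmodType) (f : A -> B) :
  (forall u v, f (u + v) = f u + f v) -> f 0 = 0.
Proof. by move=> hf; apply: (addrI (f 0)); rewrite -hf !addr0. Qed.

Lemma addf_sum (A B : zmodType) (f : A -> B) (I : Type) (r : seq I) (F : I -> A) :
  (forall u v, f (u + v) = f u + f v) -> f (\sum_(i <- r) F i) = \sum_(i <- r) f (F i).
Proof. by move=> hf; apply: (big_morph f hf (addf0 hf)). Qed.

Definition bq (x y : G) : G := \sum_(b <- supp x) (if b \in supp y then b else 0).

Lemma bq_biadd : biadditive bq.
Proof.
split=> x y z; rewrite /bq.
  by apply: sum_supp_add => b; case: ifP; rewrite ?hG2 ?addr0.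
rewrite -big_split /=; apply: eq_bigr => b _.
by rewrite mem_supp_add; case: (b \in supp y); case: (b \in supp z); rewrite /= ?addr0 ?add0r ?hG2.
Qed.

Lemma bq_diag g : bq g g = g.
Proof.
rewrite /bq -[RHS]supp_sum; apply: eq_big_seq => b ->; done.
Qed.

Variables (E : zmodType) (wedge : G -> G -> E).
Hypothesis hwb : biadditive wedge.
Hypothesis hwa : forall x, wedge x x = 0.

Lemma wedge2 a b : wedge a b + wedge a b = 0.
Proof. by rewrite -(proj1 hwb) hG2 (addf0 (fun u v => (proj1 hwb) u v b)). Qed.

Lemma wedge_swap a b : wedge b a = wedge a b.
Proof.
have := hwa (a + b); rewrite (proj1 hwb) !(proj2 hwb) !hwa add0r addr0 => e.
by apply: (addIr (wedge b a)); rewrite wedge2 -e addrC.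
Qed.

Definition bw (x y : G) : E :=
  \sum_(a <- supp x) \sum_(b <- supp y) (if WR a b then wedge a b else 0).

Lemma bw_biadd : biadditive bw.
Proof.
split=> x y z; rewrite /bw.
  apply: sum_supp_add => a; rewrite -big_split /=; apply: big1 => b _.
  by case: ifP; rewrite ?wedge2 ?addr0.
rewrite -big_split /=; apply: eq_bigr => a _.
by apply: sum_supp_add => b; case: ifP; rewrite ?wedge2 ?addr0.
Qed.

Lemma bw_sym x y : bw x y + bw y x = wedge x y.
Proof.
rewrite /bw [X in _ + X]exchange_big /= -big_split /=.
rewrite -[in RHS](supp_sum x) (addf_sum _ _ (fun u v => (proj1 hwb) u v y)).
apply: eq_bigr => a _; rewrite -big_split /=.
rewrite -[in RHS](supp_sum y) (addf_sum _ _ ((proj2 hwb) a)).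
apply: eq_bigr => b _; rewrite wedge_swap.
case: (boolP (WR a b)) => hab; case: (boolP (WR b a)) => hba.
- by rewrite (WR_anti hab hba) hwa addr0.
- by rewrite addr0.
- by rewrite add0r.
- by move: (WR_total a b); rewrite (negbTE hab) (negbTE hba).
Qed.

End Basis.

Definition Z2 : Type := bool.
HB.instance Definition _ := Choice.on Z2.
HB.instance Definition _ := @isGroup.Build Z2 false id addb addbA addFb addbF addbb addbb.

Lemma Z2_prod (I : Type) (r : seq I) (F : I -> bool) :
  (\prod_(i <- r) (F i : Z2))%g = odd (count F r).
Proof.
elim: r => [|i r IH]; first by rewrite big_nil.
by rewrite big_cons IH oddD; case: (F i); case: (odd (count F r)).
Qed.

Section Main.
Variables (G : zmodType) (T : G -> Prop)
  (TT : zmodType) (tens : G -> G -> TT)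
  (E : zmodType) (wedge : G -> G -> E)
  (U : groupType) (iota : G -> U) (phi : U -> E * G * bool).
Hypothesis hG2 : forall g : G, g + g = 0.
Hypothesis hT0 : T 0.
Hypothesis htens : is_tensor_square tens.
Hypothesis hext : is_exterior_square wedge.
Hypothesis hpres : presents T iota.
Hypothesis hphi : forall x y : U, phi (x * y)%g = Wmul wedge (phi x) (phi y).
Hypothesis hiota : forall t, T t -> phi (iota t) = (0, t, true).

Let hwb : biadditive wedge := hext.1.1.
Let hwa : forall x, wedge x x = 0 := hext.1.2.

Fixpoint Qw (w : seq G) : E :=
  if w is t :: w' then Qw w' + \sum_(x <- w') wedge t x else 0.

Lemma phi1 : phi 1%g = (0, 0, false).
Proof.
have := hphi 1%g 1%g; rewrite mulg1.
case: (phi 1%g) => [[l g] v] /= [el eg ev].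
have vF : v = false by rewrite ev addbb.
move: el eg; rewrite vF /= => el eg.
have g0 : g = 0 by rewrite eg hG2.
move: el; rewrite g0 hwa addr0 => el.
have l0 : l = 0 by apply: (addrI l); rewrite addr0 -el.
by rewrite l0.
Qed.

Lemma phi_prod w : (forall x, x \in w -> T x) ->
  phi (\prod_(t <- w) iota t)%g = (Qw w, \sum_(t <- w) t, odd (size w)).
Proof.
elim: w => [_|t w IH Hw]; first by rewrite big_nil phi1 big_nil.
have Hw' : forall x, x \in w -> T x by move=> x xw; apply: Hw; rewrite inE xw orbT.
rewrite big_cons hphi (hiota (Hw _ (mem_head _ _))) (IH Hw').
rewrite /= oppG // add0r big_cons.
by rewrite (addf_sum _ _ ((proj2 hwb) t)).
Qed.



Let htb : biadditive tens := htens.1.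

Lemma tens00 : tens 0 0 = 0.
Proof. exact: (addf0 (fun u v => htb.1 u v 0)). Qed.

Lemma Q_tens (hs : E -> TT) : additive_fun hs ->
  (forall x y, hs (wedge x y) = tens x y + tens y x) ->
  forall w, hs (Qw w) + \sum_(x <- w) tens x x = tens (\sum_(x <- w) x) (\sum_(x <- w) x).
Proof.
move=> hsadd hsw; elim=> [|t w IH]; first by rewrite /= !big_nil (addf0 hsadd) tens00 addr0.
rewrite /= !big_cons hsadd (addf_sum _ _ hsadd).
rewrite htb.1 !htb.2 -IH (addf_sum _ _ (htb.2 t)) (addf_sum _ _ (fun u v => htb.1 u v t)).
rewrite (eq_bigr _ (fun i _ => hsw t i)) big_split /=.
set X := hs (Qw w); set S1 := \sum_(i <- w) tens t i; set S2 := \sum_(i <- w) tens i t.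
set a := tens t t; set D := \sum_(x <- w) tens x x.
rewrite (addrC X) -!addrA [RHS]addrCA; congr (_ + _).
rewrite [RHS]addrCA; congr (_ + _); exact: addrCA.
Qed.


Let BW := bw hG2 wedge.
Let hbw : biadditive BW := bw_biadd hG2 hwb.

Lemma Q_bw w : BW (\sum_(x <- w) x) (\sum_(x <- w) x) = \sum_(x <- w) BW x x + Qw w.
Proof.
elim: w => [|t w IH]; first by rewrite !big_nil /= (addf0 (fun u v => hbw.1 u v 0)) addr0.
rewrite /= !big_cons hbw.1 !hbw.2 IH.
have e : BW t (\sum_(x <- w) x) + BW (\sum_(x <- w) x) t = \sum_(x <- w) wedge t x.
  by rewrite bw_sym // (addf_sum _ _ (hwb.2 t)).
rewrite -e -!addrA; congr (_ + _).
by rewrite [LHS]addrA [RHS]addrA [RHS]addrC.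
Qed.

Lemma iota_sq t : T t -> (iota t * iota t = 1)%g.
Proof. by move=> Tt; have := hpres.1.1 t Tt. Qed.

Lemma inv_iota t : T t -> ((iota t)^-1 = iota t)%g.
Proof. by move=> Tt; rewrite -[RHS](mulKg (iota t)) iota_sq // mulg1. Qed.

Lemma iota_comm t a : T t -> T a -> (iota t * iota a = iota a * iota t)%g.
Proof.
move=> Tt Ta; have := hpres.1.2 t a Tt Ta.
rewrite mulr2n hG2 sub0r oppG // => e.
by rewrite -[LHS](mulgVK (iota t)) e.
Qed.

Lemma prod_rem S t : (forall x, x \in S -> T x) -> t \in S ->
  (\prod_(x <- S) iota x = iota t * \prod_(x <- rem t S) iota x)%g.
Proof.
elim: S => [//|a S IH] HS /=.
have Ta : T a by apply: HS; exact: mem_head.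
have HS' : forall x, x \in S -> T x by move=> x xS; apply: HS; rewrite inE xS orbT.
rewrite inE; case: (altP (a =P t)) => [->|nat] /= tS; first by rewrite big_cons.
move: tS; rewrite eq_sym (negbTE nat) /= => tS.
rewrite !big_cons (IH HS' tS) !mulgA iota_comm //.
by apply: HS; rewrite inE tS orbT.
Qed.

Lemma red w : (forall x, x \in w -> T x) ->
  exists S, [/\ uniq S, forall x, x \in S -> T x &
    (\prod_(t <- w) iota t = \prod_(t <- S) iota t)%g].
Proof.
elim: w => [_|t w IH Hw]; first by exists [::]; split.
have Tt : T t by apply: Hw; exact: mem_head.
have [S [uS TS eS]] := IH (fun x xw => Hw x (mem_behead (s := t :: w) xw)).
rewrite big_cons eS.
case: (boolP (t \in S)) => tS.
  exists (rem t S); split; first exact: rem_uniq.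
    by move=> x /mem_rem; apply: TS.
  by rewrite (prod_rem TS tS) mulgA iota_sq // mul1g.
exists (t :: S); split; rewrite ?big_cons //=; first by rewrite tS.
by move=> x /[!inE] /orP[/eqP ->|/TS].
Qed.

Lemma tens_alt : biadditive (fun x y => tens x y + tens y x) /\
  (forall x, tens x x + tens x x = 0).
Proof.
split; first split=> x y z.
- by rewrite htb.1 htb.2 addrACA.
- by rewrite htb.2 htb.1 addrACA.
by move=> x; rewrite -htb.1 hG2 (addf0 (fun u v => htb.1 u v x)).
Qed.

Lemma injB : two_independent tens (fun g => T g /\ g != 0) -> injective phi.
Proof.
move=> hind x y exy.
have [hq [hqadd [hqt _]]] := htens.2 G (bq hG2) (bq_biadd hG2).
have [hs [hsadd [hsw _]]] := hext.2 TT _ tens_alt.1 tens_alt.2.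
have ez : phi (x * y^-1)%g = phi 1%g by rewrite hphi exy -hphi mulgV.
have [w [Tw ew]] := hpres.2.1 (x * y^-1)%g.
have ew' : (x * y^-1 = \prod_(t <- map fst w) iota t)%g.
  rewrite ew big_map; apply: eq_big_seq => p pw.
  by case: ifP => // _; rewrite inv_iota //; apply: Tw.
have Tw' : forall t, t \in map fst w -> T t by move=> t /mapP [p pw ->]; apply: Tw.
have [S [uS TS eS]] := red Tw'.
move: ez; rewrite ew' eS phi_prod // phi1 => [[eQ eSum eodd]].
have tS0 : \sum_(x <- S) tens x x = 0.
  by have := Q_tens hsadd hsw S; rewrite eQ eSum (addf0 hsadd) add0r tens00.
have S'0 : [seq g <- S | g != 0] = [::].
  apply/eqP; apply: contraT => neS'; exfalso; apply: hind.
  exists [seq g <- S | g != 0]; split.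
  - by apply/eqP.
  - by move=> g; rewrite mem_filter => /andP [gn gS]; split; [exact: TS|].
  - rewrite map_inj_in_uniq ?filter_uniq // => a b _ _ eab.
    by have := congr1 hq eab; rewrite !hqt !bq_diag.
  - rewrite -[RHS]tS0 big_filter big_mkcond /=; apply: eq_bigr => g _.
    by case: ifP => // /negbFE /eqP ->; rewrite tens00.
have Ssub : {subset S <= [:: 0]}.
  move=> g gS; rewrite inE; apply: contraT => gn.
  have : g \in [seq g <- S | g != 0] by rewrite mem_filter gn.
  by rewrite S'0.
have S0 : S = [::].
  apply/eqP; rewrite -size_eq0; move: eodd (uniq_leq_size uS Ssub).
  by case: (size S) => [|[|n]].
move: ew'; rewrite eS S0 big_nil => e1.
by rewrite -(mulgVK y x) e1 mul1g.
Qed.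

Lemma injA : injective phi -> two_independent tens (fun g => T g /\ g != 0).
Proof.
move=> inj [s [sne sM suniq ssum]].
have us : uniq s := map_uniq suniq.
have [hq [hqadd [hqt _]]] := htens.2 G (bq hG2) (bq_biadd hG2).
have [hw [hwadd [hwt _]]] := htens.2 E BW hbw.
have s0 : \sum_(x <- s) x = 0.
  have := congr1 hq ssum; rewrite (addf_sum _ _ hqadd) (addf0 hqadd).
  by rewrite (eq_bigr _ (fun x _ => hqt x x)) (eq_bigr _ (fun x _ => bq_diag hG2 x)).
pose w := if odd (size s) then 0 :: s else s.
have Tw : forall x, x \in w -> T x.
  rewrite /w; case: ifP => _ x; last by move=> /sM [].
  by rewrite inE => /orP[/eqP ->|/sM []].
have tw : \sum_(x <- w) tens x x = 0.
  by rewrite /w; case: ifP => _; rewrite ?big_cons ?tens00 ?add0r.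
have sw : \sum_(x <- w) x = 0.
  by rewrite /w; case: ifP => _; rewrite ?big_cons s0 ?addr0.
have ow : odd (size w) = false by rewrite /w; case: ifP => /= ->.
have Qw0 : Qw w = 0.
  have := Q_bw w; rewrite sw (addf0 (fun u v => hbw.1 u v 0)).
  rewrite -(eq_bigr _ (fun x _ => hwt x x)) -(addf_sum _ _ hwadd) tw (addf0 hwadd) add0r.
  by move=> <-.
have e1 : (\prod_(t <- w) iota t = 1)%g by apply: inj; rewrite phi_prod // phi1 Qw0 sw ow.
pose s1 := head 0 s.
have s1s : s1 \in s by rewrite /s1; case: (s) sne => // a l _; exact: mem_head.
have s1n : s1 != 0 by have [] := sM s1 s1s.
pose f := fun t : G => ((t == s1) : Z2).
have fR : U_relations T f.
  split=> [t _|t a _ _]; first by rewrite expg2 /f; case: (t == s1).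
  rewrite mulr2n hG2 sub0r oppG // /f.
  by case: (t == s1); case: (a == s1).
have [psi [psim psii]] := hpres.2.2 Z2 f fR.
have psi1 : psi 1%g = false.
  have := psim 1%g 1%g; rewrite mulg1.
  by case: (psi 1%g).
have psiP : forall l, (forall x, x \in l -> T x) ->
    psi (\prod_(t <- l) iota t)%g = (\prod_(t <- l) f t)%g.
  elim=> [_|a l IH Hl]; first by rewrite !big_nil psi1.
  rewrite !big_cons psim psii ?IH //; first by move=> x xl; apply: Hl; rewrite inE xl orbT.
  by apply: Hl; exact: mem_head.
have := psiP w Tw; rewrite e1 psi1 Z2_prod.
have -> : count (fun t => t == s1) w = 1%N.
  have cs : count (fun t => t == s1) s = 1%N.
    by have := count_uniq_mem s1 us; rewrite s1s.
  rewrite /w; case: ifP => _ //=.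
  by rewrite eq_sym (negbTE s1n) cs.
done.
Qed.

End Main.

Unset Implicit Arguments.

Theorem theorem4p4 (G : zmodType) (T : G -> Prop)
  (TT : zmodType) (tens : G -> G -> TT)
  (E : zmodType) (wedge : G -> G -> E)
  (U : groupType) (iota : G -> U) (phi : U -> E * G * bool) :
  (forall g : G, g + g = 0) ->
  generates T -> T 0 ->
  is_tensor_square tens ->
  is_exterior_square wedge ->
  presents T iota ->
  (forall x y : U, phi (x * y)%g = Wmul wedge (phi x) (phi y)) ->
  (forall t, T t -> phi (iota t) = (0, t, true)) ->
  (injective phi <-> two_independent tens (fun g => T g /\ g != 0)).
Proof.
move=> hG2 _ hT0 htens hext hpres hphi hiota; split.
  exact: (injA hG2 hT0 htens hext hpres hphi hiota).
exact: (injB hG2 htens hext hpres hphi hiota).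
Qed.
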